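(* For integers $n\ge2$ and $r\ge2$, the windmill graph $W(n,r)$ admits a weak IASI and its sparing number is $\varphi(W(n,r))=\frac{r}{2}(n-1)(n-2)$.
   Context: The windmill graph $W(n,r)$ ($n\ge2$, $r\ge2$) is obtained by taking $r$ copies of the complete graph $K_n$ and identifying one vertex from each copy into a single shared vertex. Let $\mathbb{N}_0$ be the set of non-negative integers; for $A,B\subseteq\mathbb{N}_0$, $A+B=\{a+b:a\in A,b\in B\}$. An integer additive set-indexer (IASI) of a graph $G$ is an injective map $f:V(G)\to\mathcal{P}(\mathbb{N}_0)$ such that $f^+:E(G)\to\mathcal{P}(\mathbb{N}_0)$, $f^+(uv)=f(u)+f(v)$, is injective. A weak IASI is an IASI with $|f^+(uv)|=\max(|f(u)|,|f(v)|)$ for every edge $uv$. An edge $e$ is mono-indexed if $|f^+(e)|=1$. The sparing number $\varphi(G)$ is the minimum number of mono-indexed edges over all weak IASIs of $G$. *)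

(* Defs.v *)
From HB Require Import structures.
From mathcomp Require Import all_boot all_order.
From mathcomp Require Import finmap.
Set Implicit Arguments. Unset Strict Implicit. Unset Printing Implicit Defensive.
Local Open Scope fset_scope.

Definition sumset (A B : {fset nat}) : {fset nat} :=
  [fset (a + b)%N | a in A, b in B].

(* Windmill graph W(n,r): vertices are the shared centre [None] and, for each
   copy i < r, the n-1 non-central vertices [Some (i, j)], j < n-1. *)
Definition wvert (n r : nat) : finType := option ('I_r * 'I_n.-1).

Definition wadj (n r : nat) : rel (wvert n r) := fun u v =>
  match u, v with
  | None, None => false
  | None, Some _ => true
  | Some _, None => true
  | Some (i, j), Some (i', j') => (i == i') && (j != j')
  end.

Section Iasi.
Variables (V : finType) (adj : rel V).

Definition edges : {set {set V}} := [set [set p.1; p.2] | p : V * V & adj p.1 p.2].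

Definition is_iasi (f : V -> {fset nat}) : Prop :=
  injective f /\
  (forall u v u' v', adj u v -> adj u' v' ->
     sumset (f u) (f v) = sumset (f u') (f v') -> [set u; v] = [set u'; v']).

Definition is_weak_iasi (f : V -> {fset nat}) : Prop :=
  is_iasi f /\
  (forall u v, adj u v -> #|` sumset (f u) (f v)| = maxn #|` f u| #|` f v|).

Definition mono_edges (f : V -> {fset nat}) : nat :=
  #|[set [set p.1; p.2] | p : V * V &
      adj p.1 p.2 && (#|` sumset (f p.1) (f p.2)| == 1%N)]|.

Definition is_sparing_number (k : nat) : Prop :=
  (exists2 f, is_weak_iasi f & mono_edges f = k) /\
  (forall f, is_weak_iasi f -> (k <= mono_edges f)%N).
End Iasi.

(* Main.v *)
Require Import Defs.
From mathcomp Require Import all_boot all_order finmap zify.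
Set Implicit Arguments. Unset Strict Implicit.
Open Scope fset_scope.

Lemma seq_max (s : seq nat) : s != [::] -> exists2 m, m \in s & forall a, a \in s -> (a <= m)%N.
Proof.
elim: s => // x [|y s] IH _.
  by exists x => [|a]; rewrite ?inE // => /eqP->.
have [m ms Hm] := IH isT.
have [H|H] := leqP x m.
  exists m; first by rewrite inE ms orbT.
  move=> a; rewrite inE => /orP[/eqP->|/Hm] //.
exists x; first by rewrite inE eqxx.
move=> a; rewrite inE => /orP[/eqP->|/Hm] //; lia.
Qed.

Lemma fset_max (A : {fset nat}) : A != fset0 -> exists2 m, m \in A & forall a, a \in A -> (a <= m)%N.
Proof.
move=> H; have : (A : seq nat) != [::].
  by apply: contra H => /eqP E; apply/eqP/fsetP => x; rewrite inE; apply/idP/idP; rewrite // -[x \in A]/(x \in (A : seq nat)) E.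
move/seq_max => [m Hm1 Hm2]; exists m => //.
Qed.
Lemma two_elts (B : {fset nat}) : (2 <= #|` B|)%N -> exists b1 b2, [/\ b1 \in B, b2 \in B & (b1 < b2)%N].
Proof.
move=> H.
have : B != fset0 by rewrite -cardfs_gt0; lia.
move/fset_max => [m mB Hm].
have : (B `\ m) != fset0.
  rewrite -cardfs_gt0; move: H; rewrite (cardfsD1 m B) mB /=; lia.
case: (fset_0Vmem (B `\ m)) => [->|[b /fsetD1P [bm bB]]]; first by rewrite eqxx.
move=> _; exists b, m; split => //; have := Hm b bB; lia.
Qed.

Lemma sumset_big (A B : {fset nat}) : A != fset0 -> (2 <= #|` B|)%N ->
  (#|` A| < #|` sumset A B|)%N.
Proof.
move=> A0 /two_elts [b1 [b2 [b1B b2B lt12]]].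
have [m mA Hm] := @fset_max A A0.
pose S := [fset (a + b1)%N | a in A].
have cS : #|` S| = #|` A| by rewrite card_imfset //= => x y /= /addIn.
have mS : (m + b2)%N \notin S.
  apply/negP => /imfsetP [a /= aA E]; have := Hm a aA; lia.
have sub : (m + b2)%N |` S `<=` sumset A B.
  apply/fsubsetP => x; rewrite !inE => /orP [/eqP ->|/imfsetP [a /= aA ->]].
    by apply/imfset2P; exists m => //; exists b2.
  by apply/imfset2P; exists a => //; exists b1.
have := fsubset_leq_card sub; rewrite cardfsU1 mS cS; lia.
Qed.

Lemma sumsetC (A B : {fset nat}) : sumset A B = sumset B A.
Proof.
apply/fsetP => x; apply/imfset2P/imfset2P => -[a aA [b bB ->]];
by exists b => //; exists a => //; rewrite addnC.
Qed.

Lemma sumset0 (B : {fset nat}) : sumset fset0 B = fset0.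
Proof.
apply/fsetP => x; rewrite inE; apply/imfset2P => -[a]; by rewrite inE.
Qed.

Section Gen.
Variables (n r : nat) (f : wvert n r -> {fset nat}).
Hypothesis Hf : is_weak_iasi (@wadj n r) f.
Local Notation V := (wvert n r).
Local Notation adj := (@wadj n r).

Lemma adj_sym (u v : V) : adj u v -> adj v u.
Proof. by case: u v => [[i j]|] [[i' j']|] //=; rewrite eq_sym (eq_sym j). Qed.

Lemma adj_neq (u v : V) : adj u v -> u != v.
Proof. by case: u v => [[i j]|] [[i' j']|] //= /andP [_ H]; apply: contra H => /eqP [_ ->]. Qed.

Lemma nonempty (v w : V) : adj v w -> f v != fset0.
Proof.
move=> avw; apply/negP => /eqP E.
have := Hf.2 v w avw; rewrite E sumset0 cardfs0 max0n => /esym /eqP.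
rewrite cardfs_eq0 => /eqP E'.
have := adj_neq avw; rewrite (Hf.1.1 v w) ?eqxx // E E' //.
Qed.

Definition big (v : V) := (2 <= #|` f v|)%N.

Lemma no_big_edge (u v : V) : adj u v -> big u -> big v -> False.
Proof.
move=> auv bu bv.
have H := Hf.2 u v auv.
have h1 := sumset_big (nonempty auv) bv.
have h2 := sumset_big (nonempty (adj_sym auv)) bu.
rewrite sumsetC in h2. move: h1 h2; rewrite H; lia.
Qed.

Lemma small1 (v w : V) : adj v w -> ~~ big v -> #|` f v| = 1%N.
Proof.
move=> avw; rewrite /big; have := nonempty avw; rewrite -cardfs_gt0; lia.
Qed.

Definition g (i : 'I_r) (j : 'I_n.-1) : V := if big (Some (i, j)) then None else Some (i, j).

Lemma g_small i j : ~~ big (g i j) /\ exists w, adj (g i j) w.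
Proof.
rewrite /g; case: ifP => B.
  split; last by exists (Some (i, j)).
  by apply/negP => bN; apply: (@no_big_edge None (Some (i, j))).
by split; [rewrite B | exists None].
Qed.

Lemma g_inj i : injective (g i).
Proof.
move=> a b; rewrite /g; case: ifP => Ba; case: ifP => Bb //; last by case.
move=> _; apply/eqP; apply/negPn/negP => ab.
by apply: (@no_big_edge (Some (i, a)) (Some (i, b))) => //=; rewrite eqxx ab.
Qed.

Lemma g_adj i a b : a != b -> adj (g i a) (g i b).
Proof.
move=> ab; rewrite /g; case: ifP => Ba; case: ifP => Bb //=.
  by exfalso; apply: (@no_big_edge (Some (i, a)) (Some (i, b))) => //=; rewrite eqxx ab.
by rewrite eqxx ab.
Qed.

Definition D : {set 'I_r * {set 'I_n.-1}} := [set x : 'I_r * {set 'I_n.-1} | #|x.2| == 2%N].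
Definition phi (x : 'I_r * {set 'I_n.-1}) : {set V} := g x.1 @: x.2.
Definition M : {set {set V}} := [set [set p.1; p.2] | p : V * V &
      adj p.1 p.2 && (#|` sumset (f p.1) (f p.2)| == 1%N)].

Lemma phi_pair i a b : phi (i, [set a; b]) = [set g i a; g i b].
Proof. by rewrite /phi /= imsetU1 imset_set1. Qed.

Lemma phi_M x : x \in D -> phi x \in M.
Proof.
case: x => i A; rewrite inE /= => /cards2P [a [b [ab ->]]].
rewrite phi_pair; apply/imsetP; exists (g i a, g i b) => //.
rewrite inE /= g_adj //= (Hf.2 _ _ (g_adj i ab)).
have [s1 [w1 h1]] := g_small i a; have [s2 [w2 h2]] := g_small i b.
by rewrite (small1 h1 s1) (small1 h2 s2).
Qed.

Lemma phi_inj : {in D &, injective phi}.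
Proof.
case=> i A [i' A']; rewrite !inE /= => /cards2P [a [b [ab ->]]] HA' E.
have [c Hc] : exists c, Some (i, c) \in phi (i, [set a; b]).
  rewrite phi_pair /g; case: ifP => Ba; last by exists a; rewrite !inE eqxx.
  case: ifP => Bb; last by exists b; rewrite !inE eqxx orbT.
  by exfalso; apply: (@no_big_edge (Some (i, a)) (Some (i, b))) => //=; rewrite eqxx ab.
move: Hc; rewrite E => /imsetP [d _] /=; rewrite /g; case: ifP => // _ [ii _].
subst i'; congr pair; have H := @imset_inj _ _ (g i) (g_inj (i:=i)). exact: H _ _ E.
Qed.

Lemma lower : (#|D| <= #|M|)%N.
Proof.
rewrite -(card_in_imset phi_inj); apply: subset_leq_card.
by apply/subsetP => y /imsetP [x xD ->]; apply: phi_M.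
Qed.

End Gen.

Lemma pow2_core a b c d : (a < b)%N -> (c < d)%N -> (2 ^ a + 2 ^ b = 2 ^ c + 2 ^ d)%N -> a = c /\ b = d.
Proof.
have key : forall a b c d, (a < b)%N -> (c < d)%N -> (b < d)%N -> (2 ^ a + 2 ^ b < 2 ^ c + 2 ^ d)%N.
  move=> a' b' c' d' h1 h2 h3.
  have e1 : (2 ^ a' < 2 ^ b')%N by rewrite ltn_exp2l.
  have e2 : (2 ^ b'.+1 <= 2 ^ d')%N by rewrite leq_exp2l.
  rewrite expnS in e2; lia.
move=> ab cd E.
have bd : b = d.
  case: (ltngtP b d) => // h; [have := key _ _ _ _ ab cd h | have := key _ _ _ _ cd ab h]; lia.
subst d; split => //; apply/eqP; rewrite -(@eqn_exp2l 2) //; apply/eqP; lia.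
Qed.

Lemma pow2_sum a b c d : a != b -> c != d -> (2 ^ a + 2 ^ b = 2 ^ c + 2 ^ d)%N ->
  (a = c /\ b = d) \/ (a = d /\ b = c).
Proof.
move=> ab cd E.
case: (ltngtP a b) ab => // h1 _; case: (ltngtP c d) cd => // h2 _.
- by left; apply: pow2_core.
- by right; have [] := pow2_core h1 h2 (etrans E (addnC _ _)).
- by right; have [] := pow2_core h1 h2 (etrans (addnC _ _) E).
- by left; have [] := pow2_core h1 h2 (etrans (addnC _ _) (etrans E (addnC _ _))).
Qed.

Lemma sumset11 x y : sumset [fset x] [fset y] = [fset (x + y)%N].
Proof.
apply/fsetP => z; rewrite inE; apply/imfset2P/eqP.
  by move=> [a /fset1P -> [b /fset1P -> ->]].
by move=> ->; exists x; rewrite ?inE //; exists y; rewrite ?inE.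
Qed.

Lemma sumset21 y : sumset [fset 0%N; 1%N] [fset y] = [fset y; y.+1].
Proof.
apply/fsetP => z; apply/imfset2P/fset2P.
  by move=> [a /fset2P [->|->] [b /fset1P -> ->]]; [left|right].
by move=> [->|->]; [exists 0%N|exists 1%N]; rewrite ?inE //; exists y; rewrite ?inE.
Qed.

Lemma card21 y : #|` [fset y; y.+1]| = 2%N.
Proof. by rewrite cardfs2 neq_ltn ltnSn. Qed.

Lemma eq21 x y : [fset x; x.+1] = [fset y; y.+1] -> x = y.
Proof.
move=> E.
have hx : x \in [fset y; y.+1] by rewrite -E !inE eqxx.
have hy : y \in [fset x; x.+1] by rewrite E !inE eqxx.
move: hx hy => /fset2P h1 /fset2P h2; lia.
Qed.

Section Constr.
Variables (n r : nat).
Local Notation V := (wvert n r).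
Local Notation adj := (@wadj n r).

Definition kk (v : V) : nat := val (enum_rank v).
Lemma kk_inj : injective kk.
Proof. by move=> u v /val_inj /enum_rank_inj. Qed.

Definition code (v : V) : nat := 2 ^ kk v.
Lemma code_inj : injective code.
Proof. by move=> u v /eqP; rewrite eqn_exp2l // => /eqP /kk_inj. Qed.

Definition f0 (v : V) : {fset nat} :=
  if v is Some _ then [fset code v] else [fset 0%N; 1%N].

Lemma f0_weak : is_weak_iasi adj f0.
Proof.
split; last first.
  case=> [u|] [v|] //= _.
  + by rewrite sumset11 !cardfs1 maxnn.
  + by rewrite sumsetC sumset21 card21 (card21 0) cardfs1.
  + by rewrite sumset21 card21 (card21 0) cardfs1.
split.
  case=> [u|] [v|] //=.
  + by move/fsetP => /(_ (code (Some u))); rewrite !inE eqxx => /esym/eqP/code_inj ->.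
  + by move/(congr1 (fun A => #|` A|)); rewrite cardfs1 cardfs2.
  + by move/(congr1 (fun A => #|` A|)); rewrite cardfs1 cardfs2.
have c12 : forall x y : nat, #|` [fset x; x.+1]| <> #|` [fset y]|.
  by move=> x y; rewrite card21 cardfs1.
case=> [u|] [v|] [u'|] [v'|] // a1 a2 /=; rewrite ?sumset11 ?(sumsetC _ [fset 0%N; 1%N]) ?sumset21.
- move=> E; have : (code (Some u) + code (Some v) = code (Some u') + code (Some v'))%N.
    by apply/fset1P; rewrite -E inE.
  have n1 : kk (Some u) != kk (Some v) by apply: contra (adj_neq a1) => /eqP /kk_inj ->.
  have n2 : kk (Some u') != kk (Some v') by apply: contra (adj_neq a2) => /eqP /kk_inj ->.
  move/(pow2_sum n1 n2) => [[/kk_inj -> /kk_inj ->]|[/kk_inj -> /kk_inj ->]] //.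
  by rewrite setUC.
- by move/(congr1 (fun A => #|` A|)) => /esym /c12.
- by move/(congr1 (fun A => #|` A|)) => /esym /c12.
- by move/(congr1 (fun A => #|` A|)) => /c12.
- by move/eq21/code_inj ->.
- by move/eq21/code_inj ->; rewrite setUC.
- by move/(congr1 (fun A => #|` A|)) => /c12.
- by move/eq21/code_inj ->; rewrite setUC.
- by move/eq21/code_inj ->.
Qed.

Lemma upper : (#|M f0| <= #|D n r|)%N.
Proof.
rewrite -(card_in_imset (phi_inj f0_weak)); apply: subset_leq_card.
apply/subsetP => e /imsetP [[u v] /=]; rewrite inE /= => /andP [auv].
rewrite (f0_weak.2 _ _ auv).
case: u v auv => [[i j]|] [[i' j']|] //=; rewrite ?cardfs1 ?cardfs2 //.
case/andP => /eqP <- jj _ ->.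
have gS : forall b, g f0 i b = Some (i, b) by move=> b; rewrite /g /big /= cardfs1.
apply/imsetP; exists (i, [set j; j']).
  by rewrite inE /= cards2 jj.
by rewrite phi_pair !gS.
Qed.

End Constr.

Lemma cardD n r : #|D n r| = (r * 'C(n.-1, 2))%N.
Proof.
have -> : D n r = setX [set: 'I_r] [set A : {set 'I_n.-1} | #|A| == 2%N].
  by apply/setP => -[i A]; rewrite !inE.
by rewrite cardsX cardsT card_ord card_draws card_ord.
Qed.

Lemma target n r : (2 <= n)%N -> (r * 'C(n.-1, 2))%N = (r * ((n - 1) * (n - 2))) %/ 2.
Proof.
move=> Hn.
have -> : (n - 2 = (n.-1).-1)%N by lia.
rewrite -subn1 bin2; set m := (n - 1)%N.
have ev : odd (m * m.-1) = false.
  by rewrite oddM; case: m => //= k; case: (odd k).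
have := odd_double_half (m * m.-1); rewrite ev add0n -muln2 => <-.
by rewrite -divn2 mulnK // mulnA mulnK.
Qed.

Theorem theorem2p15 (n r : nat) : (2 <= n)%N -> (2 <= r)%N ->
  (exists f : wvert n r -> {fset nat}, is_weak_iasi (@wadj n r) f) /\
  is_sparing_number (@wadj n r) ((r * ((n - 1) * (n - 2))) %/ 2).
Proof.
move=> Hn Hr.
have F := @f0_weak n r.
split; first by exists (@f0 n r).
rewrite -(target r Hn) -cardD.
split.
  exists (@f0 n r) => //.
  apply/eqP; rewrite eqn_leq; apply/andP; split.
    exact: upper.
  exact: (lower F).
move=> f Hf; exact: (lower Hf).
Qed.
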